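(* Let $n\ge 1$, let $m_1,\dots,m_n$ and $x_1,\dots,x_n$ be real coordinates on the phase space with $x_1,\dots,x_n$ pairwise distinct, and equip functions of $(x,m)$ with the Poisson bracket determined by $$\{x_i,x_k\}=\operatorname{sgn}(x_i-x_k),\qquad \{m_i,m_k\}=\{m_i,x_k\}=0 .$$ Let $$h=\sum_{i,k=1}^n m_i m_k e^{-|x_i-x_k|}.$$ Then the Hamiltonian equations $\dot x_j=\{x_j,h\}$, $\dot m_j=\{m_j,h\}$ are exactly the system $$\dot m_j=0,\qquad \dot x_j=2\sum_{\substack{1\le k\le n\\ k\neq j}} m_j m_k e^{-|x_j-x_k|}+\sum_{k\neq j,\ i\neq j} m_i m_k\bigl(1-\operatorname{sgn}(x_j-x_k)\operatorname{sgn}(x_j-x_i)\bigr)e^{-|x_j-x_k|-|x_j-x_i|},\qquad 1\le j\le n,$$ (the second sum running over all pairs $(i,k)$ with $i\neq j$, $k\neq j$), i.e. the equations of motion of $n$ conservative peakons of the modified Camassa–Holm equation. Moreover, with $u(x)=\sum_{j=1}^n m_j e^{-|x-x_j|}$ and $m=u-u_{xx}=2\sum_{j=1}^n m_j\delta_{x_j}$, one has $h=\tfrac12\int u\,m\,d\xi=\tfrac12\|u\|_{H^1}^2$.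
   Context: The system arises from the modified Camassa–Holm equation $m_t+((u^2-u_x^2)m)_x=0$, $m=u-u_{xx}$, with the peakon Ansatz $u=\sum_j m_j(t)e^{-|x-x_j(t)|}$ and the rule that $u_x^2 m$ is defined by multiplying the Dirac mass at each $x_j$ by the arithmetic average of the left and right limits of $u_x^2$ at $x_j$; this gives $\dot m_j=0$, $\dot x_j=u(x_j)^2-\langle u_x^2\rangle(x_j)$, which is the displayed system. Here $\|u\|_{H^1}^2=\int(u^2+u_x^2)\,dx$. *)

(* Defs.v *)
From HB Require Import structures.
From mathcomp Require Import all_boot all_order all_algebra.
From mathcomp Require Import all_classical all_reals all_analysis.
Set Implicit Arguments. Unset Strict Implicit. Unset Printing Implicit Defensive.
Import Order.TTheory GRing.Theory Num.Theory.
Import numFieldNormedType.Exports.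
Local Open Scope ring_scope.

Section PeakonDefs.
Variables (R : realType) (n : nat).

Definition phase_fun := ('I_n -> R) -> ('I_n -> R) -> R.

Definition upd (v : 'I_n -> R) (k : 'I_n) (t : R) : 'I_n -> R :=
  fun i => if i == k then t else v i.

Definition dx (F : phase_fun) (k : 'I_n) (x m : 'I_n -> R) : R :=
  derive1 (fun t => F (upd x k t) m) (x k).
Definition dm (F : phase_fun) (k : 'I_n) (x m : 'I_n -> R) : R :=
  derive1 (fun t => F x (upd m k t)) (m k).

Definition Pxx (x : 'I_n -> R) (i k : 'I_n) : R := Num.sg (x i - x k).
Definition Pxm (x : 'I_n -> R) (i k : 'I_n) : R := 0.
Definition Pmx (x : 'I_n -> R) (i k : 'I_n) : R := 0.
Definition Pmm (x : 'I_n -> R) (i k : 'I_n) : R := 0.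

Definition pbracket (F G : phase_fun) (x m : 'I_n -> R) : R :=
  \sum_(i < n) \sum_(k < n)
    (  Pxx x i k * dx F i x m * dx G k x m
     + Pxm x i k * dx F i x m * dm G k x m
     + Pmx x i k * dm F i x m * dx G k x m
     + Pmm x i k * dm F i x m * dm G k x m).

Definition xcoord (j : 'I_n) : phase_fun := fun x m => x j.
Definition mcoord (j : 'I_n) : phase_fun := fun x m => m j.

Definition ham : phase_fun := fun x m =>
  \sum_(i < n) \sum_(k < n) m i * m k * expR (- `|x i - x k|).

Definition xdot_rhs (x m : 'I_n -> R) (j : 'I_n) : R :=
  2 * (\sum_(k < n | k != j) m j * m k * expR (- `|x j - x k|))
  + \sum_(i < n | i != j) \sum_(k < n | k != j)
      m i * m k * (1 - Num.sg (x j - x k) * Num.sg (x j - x i))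
        * expR (- `|x j - x k| - `|x j - x i|).

Definition peakon_u (x m : 'I_n -> R) (xi : R) : R :=
  \sum_(j < n) m j * expR (- `|xi - x j|).

(* pairing  int u * mu  for the measure  mu = 2 sum_j m_j delta_{x_j} *)
Definition pair_delta (x m : 'I_n -> R) (f : R -> R) : R :=
  \sum_(j < n) 2 * m j * f (x j).

End PeakonDefs.

(* Main.v *)
Require Import Defs.
From HB Require Import structures.
From mathcomp Require Import all_boot all_order all_algebra.
From mathcomp Require Import all_classical all_reals all_analysis.
Import Order.TTheory GRing.Theory Num.Theory.
Import numFieldNormedType.Exports.
From mathcomp Require Import ring lra.
From mathcomp Require Import measurable_realfun.
Local Open Scope ring_scope.

Section A.
Local Open Scope classical_set_scope.
Local Open Scope ring_scope.
Local Set Implicit Arguments.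
Variable R : realType.

Lemma is_derive_expabs (g : R -> R) (t dg : R) :
  is_derive t 1 g dg -> g t != 0 ->
  is_derive t 1 (fun s => expR (- `|g s|)) (- Num.sg (g t) * dg * expR (- `|g t|)).
Proof.
move=> dG gt0.
have cg : g @ t --> g t.
  apply: differentiable_continuous; apply/derivable1_diffP.
  by apply: ex_derive; exact: dG.
have Hn : \forall s \near t, expR (- (Num.sg (g t) * g s)) = expR (- `|g s|).
  case: (ltrgt0P (g t)) => [gp|gn|g0]; last by rewrite g0 eqxx in gt0.
  - near=> s; have : 0 < g s by near: s; exact: cvgr_gt cg _ gp.
    by move=> h; rewrite gtr0_sg // mul1r gtr0_norm.
  - near=> s; have : g s < 0 by near: s; exact: cvgr_lt cg _ gn.
    by move=> h; rewrite ltr0_sg // mulN1r ltr0_norm.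
apply: near_eq_is_derive Hn _.
have h1 : is_derive t 1 (fun s => - (Num.sg (g t) * g s)) (- (Num.sg (g t) * dg)).
  exact: (is_deriveN (is_deriveZ (Num.sg (g t)) dG)).
have := is_derive1_comp (f := expR) (is_derive_expR _) h1.
rewrite /comp.
have -> : (- (Num.sg (g t) * g t)) = - `|g t|.
  by rewrite -normrEsg.
by have -> : - Num.sg (g t) * dg * expR (- `|g t|) = expR (- `|g t|) * - (Num.sg (g t) * dg) by ring.
Unshelve. all: by end_near.
Qed.

End A.


Section B.
Local Open Scope classical_set_scope.
Local Open Scope ring_scope.
Context {R : realType}.

Lemma is_derive_sum1 {n : nat} (h : 'I_n -> R -> R) (t : R) (dh : 'I_n -> R) :
  (forall i, is_derive t 1 (h i) (dh i)) ->
  is_derive t 1 (fun s => \sum_(i < n) h i s) (\sum_(i < n) dh i).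
Proof.
move=> H.
have -> : (fun s => \sum_(i < n) h i s) = \sum_(i < n) h i by rewrite fct_sumE.
exact: is_derive_sum.
Qed.

Lemma is_derive_sum2 {n : nat} (h : 'I_n -> 'I_n -> R -> R) (t : R) (dh : 'I_n -> 'I_n -> R) :
  (forall i l, is_derive t 1 (h i l) (dh i l)) ->
  is_derive t 1 (fun s => \sum_(i < n) \sum_(l < n) h i l s) (\sum_(i < n) \sum_(l < n) dh i l).
Proof.
move=> H; apply: is_derive_sum1 => i.
exact: is_derive_sum1.
Qed.

Lemma is_derive_upd {n : nat} (x : 'I_n -> R) (k i : 'I_n) (t : R) :
  is_derive t 1 (fun s : R => upd x k s i) ((i == k)%:R : R).
Proof.
rewrite /upd; case: (i == k).
  exact: is_derive_id.
exact: is_derive_cst.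
Qed.

Lemma upd_same {n : nat} (x : 'I_n -> R) (k : 'I_n) : upd x k (x k) = x.
Proof. by apply/funext => i; rewrite /upd; case: eqP => // ->. Qed.

Definition dterm {n : nat} (x m : 'I_n -> R) (i l k : 'I_n) : R :=
  m i * m l * (- Num.sg (x i - x l) * ((i == k)%:R - (l == k)%:R) * expR (- `|x i - x l|)).

Lemma ham_dx {n : nat} (x m : 'I_n -> R) (k : 'I_n) : injective x ->
  is_derive (x k) 1 (fun t => ham (upd x k t) m)
    (\sum_(i < n) \sum_(l < n) dterm x m i l k).
Proof.
move=> injx; rewrite /ham.
apply: (is_derive_sum2 (fun i l t => m i * m l * expR (- `|upd x k t i - upd x k t l|))).
move=> i l; rewrite /dterm.
have [->|il] := eqVneq i l.
  rewrite subrr sgr0 !(mulr0, mul0r, oppr0).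
  have -> : (fun t => m l * m l * expR (- `|upd x k t l - upd x k t l|)) = cst (m l * m l * expR 0).
    by apply/funext => t; rewrite subrr normr0 oppr0.
  exact: is_derive_cst.
pose g := fun s => upd x k s i - upd x k s l.
have dg : is_derive (x k) 1 g ((i == k)%:R - (l == k)%:R) :=
  is_deriveB (is_derive_upd x k i (x k)) (is_derive_upd x k l (x k)).
have gE : g (x k) = x i - x l by rewrite /g !upd_same.
have gne : g (x k) != 0.
  rewrite gE subr_eq0; apply/eqP => /injx /eqP; by rewrite (negbTE il).
have := is_deriveZ (m i * m l) (is_derive_expabs dg gne).
by rewrite gE.
Qed.

Lemma derivable_sum2 {n : nat} (h : 'I_n -> 'I_n -> R -> R) (t : R) :
  (forall i l, derivable (h i l) t 1) ->
  derivable (fun s => \sum_(i < n) \sum_(l < n) h i l s) t 1.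
Proof.
move=> H.
have -> : (fun s => \sum_(i < n) \sum_(l < n) h i l s) = \sum_(i < n) (fun s => \sum_(l < n) h i l s)
  by rewrite fct_sumE.
apply: derivable_sum => i.
have -> : (fun s => \sum_(l < n) h i l s) = \sum_(l < n) h i l by rewrite fct_sumE.
exact: derivable_sum.
Qed.

Lemma derivable_mulfun (f g : R -> R) (t : R) :
  derivable f t 1 -> derivable g t 1 -> derivable (fun s => f s * g s) t 1.
Proof. move=> df dg; exact: (derivableM df dg). Qed.

Lemma ham_dm {n : nat} (x m : 'I_n -> R) (k : 'I_n) :
  derivable (fun t => ham x (upd m k t)) (m k) 1.
Proof.
rewrite /ham; apply: derivable_sum2 => i l.
apply: derivable_mulfun; last exact: derivable_cst.
apply: derivable_mulfun; apply: ex_derive; exact: is_derive_upd.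
Qed.

End B.

Section C1.
Local Open Scope classical_set_scope.
Local Open Scope ring_scope.
Local Set Implicit Arguments.
Context {R : realType}.

Lemma sg_pos {a b : R} : b < a -> Num.sg (a - b) = 1.
Proof. by move=> h; rewrite gtr0_sg // subr_gt0. Qed.
Lemma sg_neg {a b : R} : a < b -> Num.sg (a - b) = -1.
Proof. by move=> h; rewrite ltr0_sg // subr_lt0. Qed.
Lemma nrm_pos {a b : R} : b < a -> `|a - b| = a - b.
Proof. by move=> h; rewrite gtr0_norm // subr_gt0. Qed.
Lemma nrm_neg {a b : R} : a < b -> `|a - b| = b - a.
Proof. by move=> h; rewrite ltr0_norm ?opprB // subr_lt0. Qed.

Lemma three_pt {a b c : R} : a != b -> a != c -> b != c ->
  - (Num.sg (a - b) * Num.sg (b - c) + Num.sg (a - c) * Num.sg (c - b)) * expR (- `|b - c|)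
  = (1 - Num.sg (a - c) * Num.sg (a - b)) * expR (- `|a - c| - `|a - b|).
Proof.
move=> ab ac bc.
have [hab|hab] : a < b \/ b < a by move: ab; rewrite neq_lt => /orP[]; [left|right].
all: have [hac|hac] : a < c \/ c < a by move: ac; rewrite neq_lt => /orP[]; [left|right].
all: have [hbc|hbc] : b < c \/ c < b by move: bc; rewrite neq_lt => /orP[]; [left|right].
all: rewrite ?(sg_pos hab) ?(sg_neg hab) ?(sg_pos hac) ?(sg_neg hac) ?(sg_pos hbc) ?(sg_neg hbc).
all: rewrite ?(nrm_pos hab) ?(nrm_neg hab) ?(nrm_pos hac) ?(nrm_neg hac) ?(nrm_pos hbc) ?(nrm_neg hbc).
all: try (by ring).
all: try (by exfalso; lra).
- by rewrite (_ : - (a - c) - (b - a) = - (b - c)); [ring|ring].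
- by rewrite (_ : - (c - a) - (a - b) = - (c - b)); [ring|ring].
Qed.
End C1.

Section C.
Local Open Scope classical_set_scope.
Local Open Scope ring_scope.
Variable R : realType.

Lemma is_derive_val {f : R -> R} {t df : R} : is_derive t 1 f df -> derive1 f t = df.
Proof. by move=> H; rewrite derive1E; exact: (@derive_val _ _ _ _ _ _ _ H). Qed.

Lemma sum_delta n (F : 'I_n -> R) (k : 'I_n) : \sum_(i < n) (i == k)%:R * F i = F k.
Proof.
rewrite (bigD1 k) //= eqxx mul1r big1 ?addr0 // => i /negbTE ->; by rewrite mul0r.
Qed.

Lemma sum_sym_eq n (A B : 'I_n -> 'I_n -> R) :
  (forall k l, A k l + A l k = B k l + B l k) ->
  \sum_(k < n) \sum_(l < n) A k l = \sum_(k < n) \sum_(l < n) B k l.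
Proof.
move=> H.
have E (C : 'I_n -> 'I_n -> R) : \sum_(k < n) \sum_(l < n) (C k l + C l k) = 2 * \sum_(k < n) \sum_(l < n) C k l.
  under eq_bigr do rewrite big_split /=.
  rewrite big_split /= [X in _ + X]exchange_big /=; ring.
have := E A; rewrite (eq_bigr (fun k => \sum_(l < n) (B k l + B l k))); last first.
  by move=> k _; apply: eq_bigr => l _; exact: H.
rewrite E => H2.
have h2 : (2:R) != 0 by rewrite pnatr_eq0.
exact: (esym (mulfI h2 H2)).
Qed.

Variables (n : nat) (x m : 'I_n -> R).
Hypothesis injx : injective x.

Let E (i l : 'I_n) := expR (- `|x i - x l|).
Let g (i l : 'I_n) := - (m i * m l * Num.sg (x i - x l) * E i l).

Lemma dx_ham (k : 'I_n) : dx (@ham R n) k x m = 2 * \sum_(l < n) g k l.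
Proof.
rewrite /dx (is_derive_val (ham_dx x m k injx)).
transitivity (\sum_(i < n) \sum_(l < n) ((i == k)%:R * g i l - (l == k)%:R * g i l)).
  apply: eq_bigr => i _; apply: eq_bigr => l _; rewrite /dterm /g /E; ring.
under eq_bigr do rewrite sumrB.
rewrite sumrB.
under eq_bigr do rewrite -mulr_sumr.
rewrite sum_delta.
under [X in _ - X]eq_bigr do rewrite sum_delta.
have -> : \sum_(i < n) g i k = - \sum_(i < n) g k i.
  rewrite -sumrN; apply: eq_bigr => i _; rewrite /g /E.
  by rewrite distrC -opprB sgrN; ring.
ring.
Qed.

Lemma dx_xcoord (j i : 'I_n) : dx (xcoord j) i x m = (j == i)%:R.
Proof. by rewrite /dx /xcoord (is_derive_val (is_derive_upd x i j (x i))). Qed.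

Lemma dx_mcoord (j i : 'I_n) : dx (mcoord j) i x m = 0.
Proof. by rewrite /dx /mcoord (is_derive_val (is_derive_cst (m j) (x i) 1)). Qed.

Lemma pb_mcoord (j : 'I_n) : pbracket (mcoord j) (@ham R n) x m = 0.
Proof.
rewrite /pbracket big1 // => i _; rewrite big1 // => k _.
by rewrite /Pxm /Pmx /Pmm dx_mcoord; ring.
Qed.

Lemma xne (i l : 'I_n) : i != l -> x i != x l.
Proof. by move=> il; apply/eqP => /injx /eqP; rewrite (negbTE il). Qed.

Lemma lt_cases {a b : R} : a != b -> a < b \/ b < a.
Proof. by rewrite neq_lt => /orP[]; [left|right]. Qed.

Ltac sgn h := rewrite ?(sg_pos h) ?(sg_neg h) ?(nrm_pos h) ?(nrm_neg h).

Lemma pb_xcoord (j : 'I_n) : pbracket (xcoord j) (@ham R n) x m = xdot_rhs x m j.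
Proof.
rewrite /pbracket.
transitivity (\sum_(k<n) \sum_(l<n) (Num.sg (x j - x k) * 2 * g k l)).
  transitivity (\sum_(i<n) (i == j)%:R * \sum_(k<n) (Num.sg (x i - x k) * (2 * \sum_(l<n) g k l))).
    apply: eq_bigr => i _; rewrite mulr_sumr; apply: eq_bigr => k _.
    rewrite dx_xcoord dx_ham /Pxx /Pxm /Pmx /Pmm eq_sym; ring.
  rewrite (@sum_delta n (fun i => \sum_(k < n) Num.sg (x i - x k) * (2 * \sum_(l < n) g k l)) j).
  apply: eq_bigr => k _; rewrite mulr_sumr mulr_sumr; apply: eq_bigr => l _; ring.
pose Bf (k l : 'I_n) := (k == j)%:R * (l != j)%:R * (2 * (m k * m l * E k l)) +
  (k != j)%:R * (l != j)%:R * (m k * m l * (1 - Num.sg (x j - x l) * Num.sg (x j - x k))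
     * expR (- `|x j - x l| - `|x j - x k|)).
rewrite (@sum_sym_eq _ _ Bf).
  rewrite /xdot_rhs /Bf.
  under eq_bigr do rewrite big_split.
  rewrite big_split /=; congr (_ + _).
    transitivity (\sum_(i < n) (i == j)%:R * \sum_(l < n) ((l != j)%:R * (2 * (m i * m l * E i l)))).
      apply: eq_bigr => i _; rewrite mulr_sumr; apply: eq_bigr => l _; ring.
    rewrite (@sum_delta n (fun i => \sum_(l < n) ((l != j)%:R * (2 * (m i * m l * E i l)))) j).
    rewrite [in RHS]big_mkcond [in RHS]mulr_sumr; apply: eq_bigr => l _.
    by case: (l != j) => /=; rewrite /E ?mulr1n ?mulr0n; ring.
  rewrite [in RHS]big_mkcond; apply: eq_bigr => k _.
  case: (k != j) => /=.
    rewrite [in RHS]big_mkcond; apply: eq_bigr => l _.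
    by case: (l != j) => /=; rewrite ?mulr1n ?mulr0n; ring.
  by rewrite big1 // => l _; rewrite ?mulr1n ?mulr0n; ring.
move=> k l; rewrite /Bf /g /E.
have [->|kj] := eqVneq k j; have [->|lj] := eqVneq l j.
- by rewrite ?eqxx /= !subrr sgr0 ?mulr1n ?mulr0n; ring.
- rewrite ?eqxx ?(negbTE lj) ?lj /= subrr sgr0 ?mulr1n ?mulr0n.
  have [h|h] := lt_cases (xne _ _ lj); sgn h; ring.
- rewrite ?eqxx ?(negbTE kj) ?kj /= subrr sgr0 ?mulr1n ?mulr0n.
  have [h|h] := lt_cases (xne _ _ kj); sgn h; ring.
rewrite ?(negbTE kj) ?(negbTE lj) ?kj ?lj /= ?mulr1n ?mulr0n.
have [<-|kl] := eqVneq k l.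
  rewrite subrr sgr0.
  have [h|h] := lt_cases (xne _ _ kj); sgn h; ring.
have jk : j != k by rewrite eq_sym.
have jl : j != l by rewrite eq_sym.
have T := three_pt (xne _ _ jk) (xne _ _ jl) (xne _ _ kl).
rewrite (distrC (x l) (x k)) (addrC (- `|x j - x k|)).
transitivity (2 * m k * m l * (- (Num.sg (x j - x k) * Num.sg (x k - x l) +
     Num.sg (x j - x l) * Num.sg (x l - x k)) * expR (- `|x k - x l|))); first ring.
rewrite T; ring.
Qed.

End C.

Section D0.
Local Open Scope classical_set_scope.
Local Open Scope ring_scope.
Context {R : realType}.
Notation mu := (@lebesgue_measure R).

Lemma is_derive_cont {f df : R -> R} : (forall x : R, is_derive x 1 f (df x)) -> continuous f.
Proof.
move=> H x; apply: differentiable_continuous; apply/derivable1_diffP.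
exact: (@ex_derive _ _ _ _ _ _ _ (H x)).
Qed.

Lemma is_derive_expaff (c k x : R) :
  is_derive x 1 (fun s : R => expR (c + k * s)) (k * expR (c + k * x)).
Proof.
have h : is_derive x 1 (fun s : R => c + k * s) (0 + k * 1) :=
  is_deriveD (is_derive_cst c x 1) (is_deriveZ k (is_derive_id x 1)).
have := is_derive1_comp (f := expR) (is_derive_expR _) h.
by rewrite /comp add0r mulr1 mulrC.
Qed.

Lemma expaff_cvg (c : R) : (fun x : R => expR (c - 2 * x)) x @[x --> +oo] --> 0.
Proof.
have E : (fun x : R => expR (c - 2 * x)) = (fun x : R => expR c * (expR (- x) * expR (- x))).
  by apply/funext => x; rewrite -!expRD; congr expR; ring.
rewrite E (_ : (0:R) = expR c * (0 * 0)); last by rewrite !mulr0.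
apply: cvgM; first exact: cvg_cst.
by apply: cvgM; exact: cvgr_expR.
Qed.

Lemma int_exp_tail (c a : R) :
  (\int[mu]_(x in `[a, +oo[) (2 * expR (c - 2 * x))%:E = (expR (c - 2 * a))%:E)%E.
Proof.
have dF (x : R) : is_derive x 1 (fun s : R => - expR (c + (-2) * s)) (- ((-2) * expR (c + (-2) * x))) :=
  is_deriveN (is_derive_expaff c (-2) x).
have Fe : (fun s : R => - expR (c + (-2) * s)) = (fun s : R => - expR (c - 2 * s)).
  by apply/funext => s; rewrite mulNr.
rewrite Fe in dF.
have cF := is_derive_cont dF.
have cf : continuous (fun x : R => 2 * expR (c - 2 * x)).
  have e2 : (fun x : R => 2 * expR (c - 2 * x)) = (fun x : R => 2 * expR (c + (-2) * x)).
    by apply/funext => x; rewrite mulNr.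
  rewrite e2; exact: (is_derive_cont (fun x : R => is_deriveZ 2 (is_derive_expaff c (-2) x))).
rewrite (@ge0_continuous_FTC2y R (fun x : R => 2 * expR (c - 2 * x)) (fun s : R => - expR (c - 2 * s)) a 0).
- by rewrite sub0e EFinN oppeK.
- by move=> x _; rewrite mulr_ge0 // expR_ge0.
- exact: continuous_subspaceT.
- rewrite -[X in _ --> X]oppr0; apply: cvgN; exact: expaff_cvg.
- move=> x _; exact: (@ex_derive _ _ _ _ _ _ _ (dF x)).
- exact/cvg_at_right_filter/cF.
- move=> x _; rewrite derive1E (@derive_val _ _ _ _ _ _ _ (dF x)); by rewrite !mulNr opprK.
Qed.

End D0.

Section E1.
Local Open Scope classical_set_scope.
Local Open Scope ring_scope.
Context {R : realType}.
Notation mu := (@lebesgue_measure R).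

Lemma cont_expabs (a : R) : continuous (fun x : R => expR (- `|x - a|)).
Proof.
move=> x.
apply: (@continuous_comp _ _ _ (fun x : R => - `|x - a|) expR); last exact: continuous_expR.
apply: (@continuous_comp _ _ _ (fun x : R => `|x - a|) -%R); last exact: continuousN.
apply: (@continuous_comp _ _ _ (fun x : R => x - a) Num.norm); last exact: norm_continuous.
apply: continuousB => //; exact: cvg_cst.
Qed.

Lemma sg_cases (y : R) : (0 < y /\ Num.sg y = 1) \/ (y < 0 /\ Num.sg y = -1) \/ (y = 0 /\ Num.sg y = 0).
Proof.
case: (ltrgt0P y) => h.
- by left; rewrite gtr0_sg.
- by right; left; rewrite ltr0_sg.
- by right; right; rewrite h sgr0.
Qed.

Lemma sg_meas (a : R) : measurable_fun setT (fun x : R => Num.sg (x - a)).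
Proof.
apply: nondecreasing_measurable => // x y xy.
have := sg_cases (x - a); have := sg_cases (y - a).
move=> [[h1 ->]|[[h1 ->]|[h1 ->]]] [[h2 ->]|[[h2 ->]|[h2 ->]]] //; lra.
Qed.

Definition gk (a b x : R) :=
  (1 + Num.sg (x - a) * Num.sg (x - b)) * (expR (- `|x - a|) * expR (- `|x - b|)).

Lemma gk_ge0 a b x : 0 <= gk a b x.
Proof.
rewrite /gk; apply: mulr_ge0; last by rewrite mulr_ge0 // expR_ge0.
have := sg_cases (x - a); have := sg_cases (x - b).
by move=> [[h1 ->]|[[h1 ->]|[h1 ->]]] [[h2 ->]|[[h2 ->]|[h2 ->]]]; lra.
Qed.

Lemma gk_meas a b : measurable_fun setT (gk a b).
Proof.
rewrite /gk; apply: measurable_funM.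
  apply: measurable_funD => //.
  by apply: measurable_funM; exact: sg_meas.
apply: continuous_measurable_fun => x.
apply: cvgM; exact: cont_expabs.
Qed.

Lemma gkC a b : gk a b = gk b a.
Proof. by apply/funext => x; rewrite /gk [_ * Num.sg (x - b)]mulrC [expR _ * expR (- `|x - b|)]mulrC. Qed.

End E1.

Section E2.
Local Open Scope classical_set_scope.
Local Open Scope ring_scope.
Context {R : realType}.
Notation mu := (@lebesgue_measure R).

Lemma meas_cont_E (f : R -> R) (D : set R) : continuous f -> measurable D ->
  measurable_fun D (EFin \o f).
Proof.
move=> cf mD; apply/measurable_EFinP.
exact: (measurable_funS measurableT) (continuous_measurable_fun cf).
Qed.

Lemma gkE_meas a b (D : set R) : measurable D -> measurable_fun D (EFin \o gk a b).
Proof.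
move=> mD; apply/measurable_EFinP.
exact: (measurable_funS measurableT) (gk_meas a b).
Qed.

Lemma cont_2exp (c k : R) : continuous (fun x : R => 2 * expR (c + k * x)).
Proof. exact: (is_derive_cont (fun x : R => is_deriveZ 2 (is_derive_expaff c k x))). Qed.

Lemma gk_mid a b : a <= b -> (\int[mu]_(x in `[a, b]) (gk a b x)%:E = 0)%E.
Proof.
move=> ab.
rewrite (@integral_itv_bndoo _ a b (EFin \o gk a b) true false); last exact: gkE_meas.
rewrite (eq_integral (fun _ => 0%E)); first by rewrite integral0.
move=> x; rewrite inE /= in_itv /= => /andP[ax xb].
by rewrite /gk (sg_pos ax) (sg_neg xb) (_ : 1 + 1 * -1 = 0 :> R) ?mul0r //; ring.
Qed.

Lemma gk_right a b : a <= b ->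
  (\int[mu]_(x in `]b, +oo[) (gk a b x)%:E = (expR (a - b))%:E)%E.
Proof.
move=> ab.
transitivity (\int[mu]_(x in `]b, +oo[) (2 * expR ((a + b) - 2 * x))%:E)%E.
  apply: eq_integral => x; rewrite inE /= in_itv /= andbT => bx.
  have ax : a < x by apply: le_lt_trans bx.
  rewrite /gk (sg_pos ax) (sg_pos bx) (nrm_pos ax) (nrm_pos bx) -expRD.
  rewrite (_ : - (x - a) + - (x - b) = a + b - 2 * x); last by ring.
  congr (_%:E); ring.
rewrite (@integral_itv_obnd_cbnd _ b (BInfty _ false) (fun x => (2 * expR ((a + b) - 2 * x))%:E)).
  rewrite int_exp_tail; congr (_%:E); congr expR; ring.
have -> : (fun x : R => (2 * expR ((a + b) - 2 * x))%:E) = EFin \o (fun x : R => 2 * expR ((a + b) + (-2) * x)).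
  by apply/funext => x; rewrite /= mulNr.
exact: meas_cont_E (cont_2exp _ _) _.
Qed.

Lemma gk_left a b : a <= b ->
  (\int[mu]_(x in `]-oo, a[) (gk a b x)%:E = (expR (a - b))%:E)%E.
Proof.
move=> ab.
pose f := fun x : R => 2 * expR ((- a - b) + 2 * x).
have cf : continuous f by exact: cont_2exp.
transitivity (\int[mu]_(x in `]-oo, a%R[) (f x)%:E)%E.
  apply: eq_integral => x; rewrite inE /= in_itv /= => xa.
  have xb : x < b by apply: lt_le_trans ab.
  rewrite /gk /f (sg_neg xa) (sg_neg xb) (nrm_neg xa) (nrm_neg xb) -expRD.
  rewrite (_ : - (a - x) + - (b - x) = - a - b + 2 * x); last by ring.
  congr (_%:E); ring.
rewrite (@integral_itv_bndo_bndc _ (BInfty _ true) a (fun x => (f x)%:E)); last first.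
  exact: meas_cont_E.
have := @ge0_integration_by_substitutionNy R f (- a) (continuous_subspaceT cf).
rewrite opprK => ->; last first.
  by move=> x _; rewrite /f mulr_ge0 // expR_ge0.
transitivity (\int[mu]_(x in `[(- a)%R, +oo[) (2 * expR ((- a - b) - 2 * x))%:E)%E.
  apply: eq_integral => x _; rewrite /= /f; congr (_%:E); congr (_ * expR _); ring.
rewrite int_exp_tail; congr (_%:E); congr expR; ring.
Qed.

Lemma int_gk_le a b : a <= b ->
  (\int[mu]_x (gk a b x)%:E = (2 * expR (- `|a - b|))%:E)%E.
Proof.
move=> ab.
have sT : [set: R] = `]-oo, a[ `|` (`[a, b] `|` `]b, +oo[).
  apply/seteqP; split => x // _ /=; rewrite !in_itv /= andbT.
  case: (ltP x a) => xa; [by left|right].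
  case: (leP x b) => xb; [by left|by right].
rewrite sT ge0_integral_setU //=; last 4 first.
- exact: measurableU.
- apply: gkE_meas; apply: measurableU => //; exact: measurableU.
- by move=> x _; rewrite lee_fin gk_ge0.
- apply/disj_setPS => x [] /=; rewrite !in_itv /= andbT => xa [/andP[ax _]|bx]; first by lra.
  by move: bx ab; lra.
rewrite ge0_integral_setU //=; last 3 first.
- apply: gkE_meas; exact: measurableU.
- by move=> x _; rewrite lee_fin gk_ge0.
- apply/disj_setPS => x [] /=; rewrite !in_itv /= andbT => /andP[_ xb] bx; lra.
rewrite gk_left // gk_mid // gk_right // add0e -EFinD.
have -> : `|a - b| = - (a - b) by rewrite ler0_norm // subr_le0.
by rewrite opprK; congr (_%:E); ring.
Qed.

End E2.

Section F0.
Local Open Scope classical_set_scope.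
Local Open Scope ring_scope.
Context {R : realType}.
Notation mu := (@lebesgue_measure R).

Lemma setD_nil (D : set R) : D `\` [set y | y \in [::]] = D.
Proof. by apply/seteqP; split => y /=; [case|move=> Dy; split]. Qed.

Lemma setD_cons (D : set R) a s :
  D `\` [set y | y \in a :: s] = (D `\ a) `\` [set y | y \in s].
Proof.
apply/seteqP; split => y /=.
- move=> [Dy H]; split; first split => //.
    by move=> ya; apply: H; rewrite ya mem_head.
  by move=> ys; apply: H; rewrite in_cons ys orbT.
- move=> [[Dy ya] ys]; split => //; rewrite in_cons => /orP[/eqP|] //.
Qed.

Lemma meas_fill (s : seq R) (D : set R) (f : R -> \bar R) : measurable D ->
  measurable_fun (D `\` [set y | y \in s]) f -> measurable_fun D f.
Proof.
elim: s D => [|a s IH] D mD; first by rewrite setD_nil.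
rewrite setD_cons => H.
have H1 : measurable_fun (D `\ a) f by apply: IH => //; exact: measurableD.
have mDa : measurable (D `\ a) by exact: measurableD.
apply: (measurable_funS (E := (D `\ a) `|` [set a])).
- exact: measurableU.
- by move=> y Dy; have [->|ya] := eqVneq y a; [right|left; split => //; apply/eqP].
- by apply/(measurable_funU f mDa (measurable_set1 a)); split => //; exact: measurable_fun_set1.
Qed.

Lemma int_remove (s : seq R) (D : set R) (f : R -> \bar R) : measurable D ->
  measurable_fun D f ->
  (\int[mu]_(x in D `\` [set y | y \in s]) f x = \int[mu]_(x in D) f x)%E.
Proof.
elim: s D => [|a s IH] D mD mf; first by rewrite setD_nil.
have mDa : measurable (D `\ a) by exact: measurableD.
rewrite setD_cons IH //; last exact: measurable_funS mf.
apply: integral_setD1 => //; exact: measurable_funS mf.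
Qed.

Lemma int_gk a b : (\int[mu]_x (gk a b x)%:E = (2 * expR (- `|a - b|))%:E)%E.
Proof.
have [ab|ba] := leP a b; first exact: int_gk_le.
by rewrite gkC int_gk_le; [rewrite distrC | exact: ltW].
Qed.

Lemma gk_integrable a b : mu.-integrable setT (EFin \o gk a b).
Proof.
apply/integrableP; split; first exact: gkE_meas.
under eq_integral => t _ do rewrite /= ger0_norm ?gk_ge0 //.
by rewrite int_gk ltry.
Qed.

End F0.

Section F.
Local Open Scope classical_set_scope.
Local Open Scope ring_scope.
Context {R : realType}.
Notation mu := (@lebesgue_measure R).
Variables (n : nat) (x m : 'I_n -> R).

Definition vder (t : R) := \sum_(j < n) m j * (- Num.sg (t - x j) * expR (- `|t - x j|)).

Lemma du (t : R) : (forall j, t != x j) -> is_derive t 1 (peakon_u x m) (vder t).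
Proof.
move=> ht.
have -> : peakon_u x m = (fun s => \sum_(j < n) m j * expR (- `|s - x j|)) by [].
apply: (is_derive_sum1 (fun j s => m j * expR (- `|s - x j|))) => j.
have dg : is_derive t 1 (fun s : R => s - x j) (1 - 0) :=
  is_deriveB (is_derive_id t 1) (is_derive_cst (x j) t 1).
have gne : (fun s : R => s - x j) t != 0 by rewrite /= subr_eq0.
have := is_deriveZ (m j) (is_derive_expabs dg gne).
by rewrite /= subr0 mulr1.
Qed.

Lemma J_expand (t : R) : (peakon_u x m t) ^+ 2 + (vder t) ^+ 2 =
  \sum_(i < n) \sum_(k < n) m i * m k * gk (x i) (x k) t.
Proof.
rewrite /peakon_u /vder !expr2 !mulr_suml -big_split /=; apply: eq_bigr => i _.
rewrite !mulr_sumr -big_split /=; apply: eq_bigr => k _.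
rewrite /gk; ring.
Qed.

Let Jt (t : R) := (\sum_(i < n) \sum_(k < n) ((m i * m k)%:E * (gk (x i) (x k) t)%:E))%E.

Lemma Jt_int : mu.-integrable setT Jt.
Proof.
apply: integrable_sum => // i _; apply: integrable_sum => // k _.
apply: integrableZl => //; exact: gk_integrable.
Qed.

Lemma JtE : Jt = (fun t => ((peakon_u x m t) ^+ 2 + (vder t) ^+ 2)%:E).
Proof.
apply/funext => t; rewrite J_expand /Jt -sumEFin; apply: eq_bigr => i _.
rewrite -sumEFin; apply: eq_bigr => k _; by rewrite EFinM.
Qed.

Lemma int_Jt : (\int[mu]_t Jt t = (2 * ham x m)%:E)%E.
Proof.
rewrite /Jt integral_sum //; last first.
  by move=> i; apply: integrable_sum => // k _; apply: integrableZl => //; exact: gk_integrable.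
rewrite /ham mulr_sumr -sumEFin; apply: eq_bigr => i _.
rewrite integral_sum //; last first.
  by move=> k; apply: integrableZl => //; exact: gk_integrable.
rewrite mulr_sumr -sumEFin; apply: eq_bigr => k _.
rewrite integralZl //; last exact: gk_integrable.
by rewrite int_gk -EFinM; congr (_%:E); ring.
Qed.

Hypothesis injx : injective x.

Lemma H1_part : ((ham x m)%:E =
     (2^-1)%:E * \int[mu]_xi
        ((peakon_u x m xi) ^+ 2 + (derive1 (peakon_u x m) xi) ^+ 2)%:E)%E.
Proof.
pose s := map x (enum 'I_n).
have ns t : ~ (t \in s) -> forall j, t != x j.
  move=> h j; apply/eqP => tj; apply: h; rewrite tj; apply: map_f; exact: mem_enum.
have mJ : measurable_fun setT (fun t => ((peakon_u x m t) ^+ 2 + (vder t) ^+ 2)%:E).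
  rewrite -JtE; exact: measurable_int Jt_int.
have eqIJ : {in setT `\` [set y | y \in s],
    (fun t => ((peakon_u x m t) ^+ 2 + (vder t) ^+ 2)%:E) =1
    (fun t => ((peakon_u x m t) ^+ 2 + (derive1 (peakon_u x m) t) ^+ 2)%:E)}.
  move=> t; rewrite inE => -[_ ht] /=.
  by rewrite derive1E (@derive_val _ _ _ _ _ _ _ (du t (ns t ht))).
have mI : measurable_fun setT
    (fun t => ((peakon_u x m t) ^+ 2 + (derive1 (peakon_u x m) t) ^+ 2)%:E).
  apply: (@meas_fill R s setT); first exact: measurableT.
  apply: eq_measurable_fun eqIJ _.
  exact: measurable_funS mJ.
rewrite -(int_remove s setT _ measurableT mI).
rewrite (@eq_integral _ _ _ mu _ (fun t => ((peakon_u x m t) ^+ 2 + (vder t) ^+ 2)%:E)); last first.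
  by move=> t ht; rewrite (eqIJ t ht).
rewrite (int_remove s setT _ measurableT mJ) -JtE int_Jt.
by rewrite -EFinM mulrA mulVf ?mul1r // pnatr_eq0.
Qed.

End F.

Section G0.
Local Open Scope classical_set_scope.
Local Open Scope ring_scope.
Context {R : realType}.
Notation mu := (@lebesgue_measure R).

Lemma FTC_glob {f F dF : R -> R} {a b : R} : a < b -> continuous f ->
  (forall t : R, is_derive t 1 F (dF t)) -> {in `]a, b[, forall t, dF t = f t} ->
  (\int[mu]_(t in `[a, b]) (f t)%:E = (F b - F a)%:E)%E.
Proof.
move=> ab cf dF' eqf.
have cF := is_derive_cont dF'.
rewrite EFinB; apply: continuous_FTC2 => //.
- exact: continuous_subspaceT.
- split.
  + move=> t _; exact: (@ex_derive _ _ _ _ _ _ _ (dF' t)).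
  + exact/cvg_at_right_filter/cF.
  + exact/cvg_at_left_filter/cF.
- move=> t ht; rewrite derive1E (@derive_val _ _ _ _ _ _ _ (dF' t)); exact: eqf.
Qed.

Lemma loc_zero {f : R -> R} {A : R} : (forall t, A < `|t| -> f t = 0) ->
  forall t, A < `|t| -> derive1 f t = 0.
Proof.
move=> H t ht.
have Hn : \forall s \near t, (cst 0 : R -> R) s = f s.
  have cn : (fun s : R => `|s|) @ t --> `|t| by exact: norm_continuous.
  near=> s; rewrite H //; near: s; exact: cvgr_gt cn _ ht.
rewrite derive1E -(near_eq_derive (1:R) Hn).
exact: derive_cst.
Unshelve. all: by end_near.
Qed.

End G0.

Section G.
Local Open Scope classical_set_scope.
Local Open Scope ring_scope.
Context {R : realType}.
Notation mu := (@lebesgue_measure R).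
Variable phi : R -> R.
Hypothesis d1 : forall t, derivable phi t 1.
Hypothesis d2 : forall t, derivable (derive1 phi) t 1.
Hypothesis c2 : continuous (derive1n 2 phi).

Let p1 := derive1 phi.
Let p2 := derive1 p1.
Let psi := fun t => phi t - p2 t.

Lemma dphi (t : R) : is_derive t 1 phi (p1 t).
Proof. rewrite /p1 derive1E; exact: derivableP. Qed.

Lemma dp1 (t : R) : is_derive t 1 p1 (p2 t).
Proof. rewrite /p2 derive1E; exact: derivableP. Qed.

Lemma cphi : continuous phi.
Proof. exact: is_derive_cont dphi. Qed.

Lemma cpsi : continuous psi.
Proof. move=> t; apply: cvgB; [exact: cphi | exact: c2]. Qed.

Lemma cbump (a : R) : continuous (fun t => expR (- `|t - a|) * psi t).
Proof. move=> t; apply: cvgM; [exact: cont_expabs | exact: cpsi]. Qed.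

Lemma bump_int (a c d : R) : c < a -> a < d -> phi c = 0 -> p1 c = 0 ->
  phi d = 0 -> p1 d = 0 ->
  (\int[mu]_(t in `[c, d]) (expR (- `|t - a|) * psi t)%:E = (2 * phi a)%:E)%E.
Proof.
move=> ca ad phc p1c phd p1d.
pose f := fun t => expR (- `|t - a|) * psi t.
have cf : continuous f := cbump a.
have setE : `[c, d]%classic = `[c, a] `|` `]a, d].
  apply/seteqP; split => t /=; rewrite !in_itv /=.
  - move=> /andP[ct td]; case: (leP t a) => ta; [left|right]; apply/andP; split => //.
  - move=> [/andP[ct ta]|/andP[at' td]]; apply/andP; split => //; lra.
rewrite setE integral_setU //; last 2 first.
- by apply: meas_cont_E => //; exact: measurableU.
- by apply/disj_setPS => t [] /=; rewrite !in_itv /= => /andP[_ ta] /andP[at' _]; lra.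
rewrite integral_itv_obnd_cbnd; last exact: meas_cont_E.
pose H := fun t => expR (- a + 1 * t) * (phi t - p1 t).
pose dH := fun t => expR (- a + 1 * t) * (p1 t - p2 t) + (phi t - p1 t) * (1 * expR (- a + 1 * t)).
have hH (t : R) : is_derive t 1 H (dH t) :=
  is_deriveM (is_derive_expaff (- a) 1 t) (is_deriveB (dphi t) (dp1 t)).
pose G := fun t => - (expR (a + (-1) * t) * (phi t + p1 t)).
pose dG := fun t => - (expR (a + (-1) * t) * (p1 t + p2 t) + (phi t + p1 t) * (-1 * expR (a + (-1) * t))).
have hG (t : R) : is_derive t 1 G (dG t) :=
  is_deriveN (is_deriveM (is_derive_expaff a (-1) t) (is_deriveD (dphi t) (dp1 t))).
rewrite (FTC_glob ca cf hH); last first.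
  move=> t; rewrite in_itv /= => /andP[ct ta].
  rewrite /dH /f /psi (nrm_neg ta) (_ : - (a - t) = - a + 1 * t); last by ring.
  ring.
rewrite (FTC_glob ad cf hG); last first.
  move=> t; rewrite in_itv /= => /andP[at' td].
  rewrite /dG /f /psi (nrm_pos at') (_ : - (t - a) = a + (-1) * t); last by ring.
  ring.
rewrite -EFinD /H /G phc p1c phd p1d.
rewrite (_ : - a + 1 * a = 0); last by ring.
rewrite (_ : a + -1 * a = 0); last by ring.
rewrite expR0; congr (_%:E); ring.
Qed.

End G.

Section G2.
Local Open Scope classical_set_scope.
Local Open Scope ring_scope.
Context {R : realType}.
Notation mu := (@lebesgue_measure R).

Lemma cont_sum {n : nat} (h : 'I_n -> R -> R) : (forall i, continuous (h i)) ->
  continuous (fun t => \sum_(i < n) h i t).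
Proof.
move=> H.
have -> : (fun t => \sum_(i < n) h i t) = \sum_(i < n) h i by rewrite fct_sumE.
apply: (big_ind (fun f : R -> R => continuous f)).
- by move=> t; exact: cvg_cst.
- by move=> f g cf cg t; apply: cvgD; [exact: cf | exact: cg].
- by move=> i _; exact: H.
Qed.

Lemma cont_u {n : nat} (x m : 'I_n -> R) : continuous (peakon_u x m).
Proof.
apply: (cont_sum (fun j t => m j * expR (- `|t - x j|))) => j t.
apply: cvgM; [exact: cvg_cst | exact: cont_expabs].
Qed.

Lemma part4 {n : nat} (x m : 'I_n -> R) (phi : R -> R) :
  (forall xi, derivable phi xi 1) ->
  (forall xi, derivable (derive1 phi) xi 1) ->
  continuous (derive1n 2 phi) ->
  (exists A : R, forall xi, A < `|xi| -> phi xi = 0) ->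
  mu.-integrable setT
     (fun xi => (peakon_u x m xi * (phi xi - derive1n 2 phi xi))%:E) /\
  (\int[mu]_xi (peakon_u x m xi * (phi xi - derive1n 2 phi xi))%:E
   = (pair_delta x m phi)%:E)%E.
Proof.
move=> d1 d2 c2 [A HA].
have D2 : derive1n 2 phi = derive1 (derive1 phi) by [].
have Z1 := loc_zero HA.
have Z2 := loc_zero Z1.
pose B := `|A| + \sum_(j < n) `|x j| + 1.
have AB : A < B.
  have : 0 <= \sum_(j < n) `|x j| by apply: sumr_ge0 => j _.
  have := ler_norm A; rewrite /B; lra.
have xB j : `|x j| < B.
  have : `|x j| <= \sum_(i < n) `|x i|.
    rewrite (bigD1 j) //= lerDl; apply: sumr_ge0 => i _; exact: normr_ge0.
  have := normr_ge0 A; rewrite /B; lra.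
pose F := fun t => peakon_u x m t * (phi t - derive1n 2 phi t).
have cF : continuous F.
  move=> t; apply: cvgM; first exact: cont_u.
  apply: cvgB; [exact: cphi d1 t | exact: c2].
have Fout t : B < `|t| -> F t = 0.
  move=> h; have h' : A < `|t| by lra.
  by rewrite /F D2 (HA _ h') (Z2 _ h') subrr mulr0.
have mcd : measurable (`[- B, B]%classic : set R) by [].
have iF : mu.-integrable `[- B, B] (EFin \o F).
  apply: continuous_compact_integrable; first exact: segment_compact.
  exact: continuous_subspaceT.
have patchE : (EFin \o F) \_ `[- B, B] = EFin \o F.
  apply/funext => t; rewrite /patch; case: ifPn => // /negP ht.
  rewrite /= Fout //; move: ht; rewrite inE /= in_itv /= => ht.
  rewrite ltNge; apply/negP => tB; apply: ht; apply/andP; split; rewrite -?ler_norml //.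
  by move: tB; rewrite ler_norml => /andP[].
  by move: tB; rewrite ler_norml => /andP[].
split.
  rewrite -[X in _.-integrable _ X]/(EFin \o F) -patchE.
  by apply: (proj1 (integrable_mkcond _ _) iF).
have B0 : 0 < B.
  have : 0 <= \sum_(j < n) `|x j| by apply: sumr_ge0 => j _.
  have := normr_ge0 A; rewrite /B; lra.
have nB : `|B| = B by rewrite gtr0_norm.
have nNB : `|- B| = B by rewrite normrN.
transitivity (\int[mu]_(t in `[(- B)%R, B]) (EFin \o F) t)%E.
  by rewrite [RHS]integral_mkcond patchE.
have ij (j : 'I_n) : mu.-integrable `[- B, B]
    (fun t => ((m j)%:E * (expR (- `|t - x j|) * (fun t0 : R => phi t0 - derive1 (derive1 phi) t0) t)%:E)%E).
  apply: integrableZl => //; apply: continuous_compact_integrable; first exact: segment_compact.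
  exact: continuous_subspaceT (cbump phi d1 c2 (x j)).
transitivity (\int[mu]_(t in `[(- B)%R, B]) (\sum_(j < n) ((m j)%:E * (expR (- `|t - x j|) * (fun t0 : R => phi t0 - derive1 (derive1 phi) t0) t)%:E)%E))%E.
  apply: eq_integral => t _; rewrite /= /F /peakon_u D2 mulr_suml -sumEFin.
  apply: eq_bigr => j _; by rewrite -EFinM mulrA.
rewrite integral_sum //.
rewrite /pair_delta -sumEFin; apply: eq_bigr => j _.
rewrite integralZl //; last first.
  apply: continuous_compact_integrable; first exact: segment_compact.
  exact: continuous_subspaceT (cbump phi d1 c2 (x j)).
have := xB j; rewrite ltr_norml => /andP[h1 h2].
rewrite (bump_int phi d1 d2 c2 (x j) (- B) B h1 h2).
- by rewrite -EFinM; congr (_%:E); ring.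
- by apply: HA; rewrite nNB.
- by apply: Z1; rewrite nNB.
- by apply: HA; rewrite nB.
- by apply: Z1; rewrite nB.
Qed.

End G2.

Lemma part5 (R : realType) (n : nat) (x m : 'I_n -> R) :
  ham x m = 2^-1 * pair_delta x m (peakon_u x m).
Proof.
rewrite /pair_delta /peakon_u /ham mulr_sumr; apply: eq_bigr => i _.
rewrite mulrA mulrA mulVf ?pnatr_eq0 // mul1r mulr_sumr; apply: eq_bigr => k _.
by rewrite mulrA.
Qed.

Theorem theorem1 (R : realType) (n : nat) (x m : 'I_n -> R) :
  (0 < n)%N -> injective x ->
  (forall k : 'I_n,
      derivable (fun t => ham (upd x k t) m) (x k) 1 /\
      derivable (fun t => ham x (upd m k t)) (m k) 1) /\
  (forall j : 'I_n, pbracket (mcoord j) (@ham R n) x m = 0) /\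
  (forall j : 'I_n, pbracket (xcoord j) (@ham R n) x m = xdot_rhs x m j) /\
  (forall phi : R -> R,
      (forall xi, derivable phi xi 1) ->
      (forall xi, derivable (derive1 phi) xi 1) ->
      continuous (derive1n 2 phi) ->
      (exists A : R, forall xi, A < `|xi| -> phi xi = 0) ->
      (lebesgue_measure).-integrable setT
         (fun xi => (peakon_u x m xi * (phi xi - derive1n 2 phi xi))%:E) /\
      (\int[lebesgue_measure]_xi
         (peakon_u x m xi * (phi xi - derive1n 2 phi xi))%:E
       = (pair_delta x m phi)%:E)%E) /\
  ham x m = 2^-1 * pair_delta x m (peakon_u x m) /\
  ((ham x m)%:E =
     (2^-1)%:E * \int[lebesgue_measure]_xi
        ((peakon_u x m xi) ^+ 2 + (derive1 (peakon_u x m) xi) ^+ 2)%:E)%E.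
Proof.
move=> n0 injx.
split.
  move=> k; split; first exact: (@ex_derive _ _ _ _ _ _ _ (ham_dx x m k injx)).
  exact: ham_dm.
split; first by move=> j; exact: pb_mcoord.
split; first by move=> j; exact: pb_xcoord.
split; first by move=> phi d1 d2 c2 hA; exact: part4.
split; first exact: part5.
exact: H1_part.
Qed.
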